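(* Let $(X,\le)$ be a partially ordered set, $K_x=\{y\in X:y\le x\}$, and $\tau_\le$ the topology generated by the sets $K_x$ and $X\setminus K_x$, $x\in X$. If $(X,\tau_\le)$ is compact, then $(X,\tau_\le,\le)$ is a Noetherian Priestley space.
   Context: A Priestley space is a partially ordered set with a quasi-compact topology such that whenever $y\not\le x$ there is a clopen down-set containing $x$ but not $y$. It is Noetherian if every decreasing sequence of closed down-sets is eventually stationary (equivalently the topology of open up-sets is Noetherian). *)

(* Defs.v *)
From Stdlib Require Import List.

Section Priestley.
Variable X : Type.
Variable le : X -> X -> Prop.

Definition is_partial_order : Prop :=
  (forall x, le x x) /\
  (forall x y, le x y -> le y x -> x = y) /\
  (forall x y z, le x y -> le y z -> le x z).

Definition Kset (x : X) : X -> Prop := fun y => le y x.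

Definition tau_le_subbasis (S : X -> Prop) : Prop :=
  exists x, (forall y, S y <-> Kset x y) \/ (forall y, S y <-> ~ Kset x y).

(** Open sets of the topology generated by a subbasis [sub]: every point of
    U lies in a finite intersection of subbasic sets contained in U
    (the empty intersection being X). *)
Definition generated_open (sub : (X -> Prop) -> Prop) (U : X -> Prop) : Prop :=
  forall u, U u -> exists l : list (X -> Prop),
    (forall S, In S l -> sub S) /\
    (forall S, In S l -> S u) /\
    (forall v, (forall S, In S l -> S v) -> U v).

Definition tau_le_open : (X -> Prop) -> Prop := generated_open tau_le_subbasis.

Variable is_open : (X -> Prop) -> Prop.

Definition is_closed (C : X -> Prop) : Prop := is_open (fun x => ~ C x).
Definition is_clopen (C : X -> Prop) : Prop := is_open C /\ is_closed C.
Definition is_downset (D : X -> Prop) : Prop :=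
  forall x y, le y x -> D x -> D y.

Definition quasi_compact : Prop :=
  forall (I : Type) (U : I -> X -> Prop),
    (forall i, is_open (U i)) ->
    (forall x, exists i, U i x) ->
    exists l : list I, forall x, exists i, In i l /\ U i x.

Definition priestley_space : Prop :=
  is_partial_order /\ quasi_compact /\
  (forall x y, ~ le y x ->
     exists D, is_clopen D /\ is_downset D /\ D x /\ ~ D y).

Definition noetherian : Prop :=
  forall C : nat -> X -> Prop,
    (forall n, is_closed (C n) /\ is_downset (C n)) ->
    (forall n x, C (S n) x -> C n x) ->
    exists N, forall n, N <= n -> forall x, C n x <-> C N x.

Definition noetherian_priestley_space : Prop :=
  priestley_space /\ noetherian.

End Priestley.

(* Main.v *)
Require Import Defs.
From Stdlib Require Import List Lia Classical.

Fixpoint maxl {X : Type} (l : list (nat + X)) : nat :=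
  match l with
  | nil => 0
  | inl m :: t => Nat.max m (maxl t)
  | inr _ :: t => maxl t
  end.

Lemma maxl_in {X : Type} (l : list (nat + X)) m : In (inl m) l -> m <= maxl l.
Proof.
  induction l as [|a t IH]; simpl; [tauto|].
  intros [H|H]; [subst; lia|]. destruct a; specialize (IH H); lia.
Qed.

Theorem proposition3p13 (X : Type) (le : X -> X -> Prop) :
  is_partial_order X le ->
  quasi_compact X (tau_le_open X le) ->
  noetherian_priestley_space X le (tau_le_open X le).
Proof.
  intros Hpo Hqc.
  destruct Hpo as [Hrefl [Hanti Htrans]].
  split; [split; [split; [exact Hrefl|split; assumption]|split; [exact Hqc|]]|].
  - intros x y Hyx. exists (Kset X le x). split; [split|split; [|split]].
    + intros u Hu. exists (Kset X le x :: nil). split; [|split].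
      * intros S [<-|[]]. exists x. left. tauto.
      * intros S [<-|[]]. exact Hu.
      * intros v Hv. apply Hv. left; reflexivity.
    + intros u Hu. exists ((fun z => ~ Kset X le x z) :: nil). split; [|split].
      * intros S [<-|[]]. exists x. right. tauto.
      * intros S [<-|[]]. exact Hu.
      * intros v Hv. apply (Hv _ (or_introl eq_refl)).
    + intros a b Hba Ha. unfold Kset in *. eauto.
    + unfold Kset. apply Hrefl.
    + unfold Kset. exact Hyx.
  - intros C HC Hdec.
    assert (Hmono : forall m n x, m <= n -> C n x -> C m x).
    { intros m n x Hmn. induction Hmn; auto. }
    set (U := fun (i : nat + X) (y : X) =>
           match i with
           | inl m => ~ C m y
           | inr z => le y z /\ forall m, C m z
           end).
    destruct (Hqc (nat + X)%type U) as [l Hl].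
    + intros [m|z]; simpl.
      * apply (proj1 (HC m)).
      * intros u [Huz Hz]. exists (Kset X le z :: nil). split; [|split].
        -- intros S [<-|[]]. exists z. left. tauto.
        -- intros S [<-|[]]. exact Huz.
        -- intros v Hv. split; [apply Hv; left; reflexivity | exact Hz].
    + intros x. destruct (classic (forall m, C m x)) as [Hall|Hn].
      * exists (inr x). simpl. split; [apply Hrefl|exact Hall].
      * apply not_all_ex_not in Hn. destruct Hn as [m Hm].
        exists (inl m). exact Hm.
    + exists (maxl l). intros n Hn.
      apply NNPP. intros Hne. apply not_all_ex_not in Hne.
      destruct Hne as [x Hx].
      assert (HM : C (maxl l) x /\ ~ C n x).
      { destruct (classic (C n x)) as [Hc|Hc].
        - exfalso. apply Hx. split; intros; [eapply Hmono; eauto|assumption].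
        - split; [|exact Hc]. apply NNPP. intros Hc'. apply Hx. tauto. }
      destruct HM as [HM Hnx].
      destruct (Hl x) as [[m|z] [Hin Hu]]; simpl in Hu.
      * apply Hu. apply (Hmono m (maxl l)); [apply maxl_in; exact Hin|exact HM].
      * destruct Hu as [Hxz Hz]. apply Hnx.
        apply (proj2 (HC n) z x Hxz (Hz n)).
Qed.
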